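(* Let $X$ and $Y$ be nonempty compact metric spaces. Then $d^{us}_{GH}(X,Y)=d_{GH}(X,Y)$.
   Context: For a metric space, $|xy|$ denotes distance. A set-valued map $f:X\rightrightarrows Y$ assigns to each $x\in X$ a nonempty $f(x)\subseteq Y$ and is identified with its graph. A correspondence between $X$ and $Y$ is a subset $R\subseteq X\times Y$ whose projections to $X$ and to $Y$ are both surjective, regarded as the set-valued map $x\mapsto R(x)=\{y:(x,y)\in R\}$; $R^{-1}=\{(y,x):(x,y)\in R\}$; $\mathcal R(X,Y)$ is the set of all correspondences. The distortion of a nonempty $\sigma\subseteq X\times Y$ is $\operatorname{dis}\sigma=\sup\{||xx'|-|yy'||:(x,y),(x',y')\in\sigma\}\in[0,\infty]$, and $d_{GH}(X,Y)=\frac12\inf\{\operatorname{dis}R:R\in\mathcal R(X,Y)\}$. A set-valued map $f$ is upper semicontinuous if for every $x$ and every open $U\supseteq f(x)$ there is a neighborhood $V$ of $x$ with $f(x')\subseteq U$ for all $x'\in V$. $\mathcal R_{us}(X,Y)$ is the set of $R\in\mathcal R(X,Y)$ with both $R$ and $R^{-1}$ upper semicontinuous, and $d^{us}_{GH}(X,Y)=\frac12\inf\{\operatorname{dis}R:R\in\mathcal R_{us}(X,Y)\}$. *)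

(* Defs.v *)
From HB Require Import structures.
From mathcomp Require Import all_boot all_order all_algebra.
From mathcomp Require Import classical_sets boolp reals ereal Rstruct.
Set Implicit Arguments. Unset Strict Implicit. Unset Printing Implicit Defensive.
Import Order.TTheory GRing.Theory Num.Theory.
Local Open Scope classical_set_scope.
Local Open Scope ring_scope.

Notation R := Rdefinitions.R.

Record metric (X : Type) := Metric {
  mdist :> X -> X -> R;
  mdist_eq0 : forall x y, mdist x y = 0 <-> x = y;
  mdist_sym : forall x y, mdist x y = mdist y x;
  mdist_tri : forall x y z, mdist x z <= mdist x y + mdist y z }.

Definition mopen (X : Type) (dX : metric X) (U : set X) : Prop :=
  forall x, U x -> exists2 e : R, 0 < e & forall y, dX x y < e -> U y.

Definition mcompact (X : Type) (dX : metric X) : Prop :=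
  forall (I : Type) (U : I -> set X),
    (forall i, mopen dX (U i)) -> (forall x, exists i, U i x) ->
    exists s : list I, forall x, exists i, List.In i s /\ U i x.

Definition correspondence (X Y : Type) (C : set (X * Y)) : Prop :=
  (forall x, exists y, C (x, y)) /\ (forall y, exists x, C (x, y)).

Definition dis (X Y : Type) (dX : metric X) (dY : metric Y) (s : set (X * Y))
  : \bar R :=
  ereal_sup [set r : \bar R | exists p q, s p /\ s q /\
               r = (`|dX p.1 q.1 - dY p.2 q.2|)%:E].

Definition usc (X Y : Type) (dX : metric X) (dY : metric Y) (f : X -> set Y)
  : Prop :=
  forall x (U : set Y), mopen dY U -> f x `<=` U ->
    exists V : set X, [/\ mopen dX V, V x & forall x', V x' -> f x' `<=` U].

Definition corr_map (X Y : Type) (C : set (X * Y)) : X -> set Y :=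
  fun x y => C (x, y).
Definition corr_inv_map (X Y : Type) (C : set (X * Y)) : Y -> set X :=
  fun y x => C (x, y).

Definition dGH (X Y : Type) (dX : metric X) (dY : metric Y) : \bar R :=
  ((2 : R)^-1)%:E * ereal_inf [set dis dX dY C | C in correspondence (X:=X) (Y:=Y)].

Definition correspondence_us (X Y : Type) (dX : metric X) (dY : metric Y)
  (C : set (X * Y)) : Prop :=
  [/\ correspondence C, usc dX dY (corr_map C) & usc dY dX (corr_inv_map C)].

Definition dGH_us (X Y : Type) (dX : metric X) (dY : metric Y) : \bar R :=
  ((2 : R)^-1)%:E * ereal_inf [set dis dX dY C | C in correspondence_us dX dY].

(* Main.v *)
Require Import Defs.
From mathcomp Require Import all_boot all_order all_algebra.
From mathcomp Require Import classical_sets boolp reals ereal Rstruct.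
From mathcomp Require Import lra.
Set Implicit Arguments. Unset Strict Implicit. Unset Printing Implicit Defensive.
Import Order.TTheory GRing.Theory Num.Theory.
Local Open Scope classical_set_scope.
Local Open Scope ring_scope.

Lemma md0 (X : Type) (dX : metric X) x : dX x x = 0.
Proof. by apply/(mdist_eq0 dX). Qed.

Lemma md_ge0 (X : Type) (dX : metric X) x y : 0 <= dX x y.
Proof.
have := mdist_tri dX x y x; rewrite md0 (mdist_sym dX y x) => h; lra.
Qed.

Definition clos (X Y : Type) (dX : metric X) (dY : metric Y) (C : set (X * Y))
  : set (X * Y) := fun p => forall e : R, 0 < e ->
    exists q, C q /\ dX p.1 q.1 < e /\ dY p.2 q.2 < e.

Lemma clos_sub (X Y : Type) (dX : metric X) (dY : metric Y) (C : set (X * Y)) :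
  C `<=` clos dX dY C.
Proof. by move=> p Cp e e0; exists p; rewrite !md0. Qed.

Lemma clos_closed (X Y : Type) (dX : metric X) (dY : metric Y) (C : set (X * Y)) x y :
  ~ clos dX dY C (x, y) -> exists2 e : R, 0 < e &
    forall x' y', dX x x' < e -> dY y y' < e -> ~ clos dX dY C (x', y').
Proof.
move=> /existsNP [e /not_implyP [e0 /forallNP H]].
exists (e / 2); first lra.
move=> x' y' h1 h2 Hc.
have [q [Cq [q1 q2]]] := Hc (e / 2) ltac:(lra).
apply: (H q); split => //=; split.
- have := mdist_tri dX x x' q.1; simpl in *; lra.
- have := mdist_tri dY y y' q.2; simpl in *; lra.
Qed.

Lemma list_min (I : Type) (r : I -> R) (s : list I) :
  (forall i, 0 < r i) -> exists2 d : R, 0 < d & forall i, List.In i s -> d <= r i.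
Proof.
move=> rpos; elim: s => [|a s [d d0 Hd]].
  by exists 1 => // i [].
case: (leP d (r a)) => h.
- exists d => // i [<-|/Hd] //.
- exists (r a) => // i [<-|/Hd]; [by [] | move=> hi; apply/ltW/(lt_le_trans h hi)].
Qed.

Lemma usc_of_closed (X Y : Type) (dX : metric X) (dY : metric Y) (D : set (X * Y)) :
  mcompact dY ->
  (forall x y, ~ D (x, y) -> exists2 e : R, 0 < e &
    forall x' y', dX x x' < e -> dY y y' < e -> ~ D (x', y')) ->
  usc dX dY (corr_map D).
Proof.
move=> cY Dcl x U oU sub.
have : forall y, exists e : R, 0 < e /\ (~ U y ->
    forall x' y', dX x x' < e -> dY y y' < e -> ~ D (x', y')).
  move=> y; have [Uy|nUy] := pselect (U y).
    by exists 1; split => //.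
  have nD : ~ D (x, y) by move=> Dxy; apply: nUy; apply: sub.
  have [e e0 He] := Dcl x y nD.
  by exists e; split.
move=> /choice [E HE].
pose W (i : option Y) : set Y :=
  match i with None => U | Some y => fun z => ~ U y /\ dY y z < E y end.
have oW : forall i, mopen dY (W i).
  case => [y|] //= z [nUy hz].
  exists (E y - dY y z); first lra.
  move=> w hw; split => //; have := mdist_tri dY y z w; lra.
have cW : forall z, exists i, W i z.
  move=> z; have [Uz|nUz] := pselect (U z); first by exists None.
  by exists (Some z) => /=; split => //; rewrite md0; case: (HE z).
have [s Hs] := cY (option Y) W oW cW.
pose r (i : option Y) : R := match i with None => 1 | Some y => E y end.
have [d d0 Hd] := list_min s (fun i : option Y => match i return 0 < r i with
    None => ltr01 | Some y => proj1 (HE y) end).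
exists (fun x' => dX x x' < d); split.
- move=> x1 h1; exists (d - dX x x1); first lra.
  move=> x2 h2; have := mdist_tri dX x x1 x2; lra.
- by rewrite md0.
- move=> x' hx' y' Dy'; apply: contrapT => nUy'.
  have [[y|] [ins Wi]] := Hs y'; last by [].
  case: Wi => nUy hy.
  have hE := Hd _ ins; simpl in hE.
  apply: (proj2 (HE y) nUy x' y') => //; lra.
Qed.

Lemma dis_clos (X Y : Type) (dX : metric X) (dY : metric Y) (C : set (X * Y)) :
  (dis dX dY (clos dX dY C) <= dis dX dY C)%E.
Proof.
apply: ge_ereal_sup => _ [p [q [Cp [Cq ->]]]].
apply/lee_addgt0Pr => e e0.
have [a [Ca [a1 a2]]] := Cp (e / 4) ltac:(lra).
have [b [Cb [b1 b2]]] := Cq (e / 4) ltac:(lra).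
have hs : (`|dX a.1 b.1 - dY a.2 b.2|%:E <= dis dX dY C)%E.
  by apply: ereal_sup_ubound; exists a, b.
apply: (le_trans _ (leeD2r _ hs)); rewrite -EFinD lee_fin.
have t1 := mdist_tri dX p.1 a.1 q.1.
have t2 := mdist_tri dX a.1 b.1 q.1.
have t3 := mdist_tri dX a.1 p.1 b.1.
have t4 := mdist_tri dX p.1 q.1 b.1.
have t5 := mdist_tri dY p.2 a.2 q.2.
have t6 := mdist_tri dY a.2 b.2 q.2.
have t7 := mdist_tri dY a.2 p.2 b.2.
have t8 := mdist_tri dY p.2 q.2 b.2.
have s1 := mdist_sym dX a.1 p.1. have s2 := mdist_sym dX q.1 b.1.
have s3 := mdist_sym dY a.2 p.2. have s4 := mdist_sym dY q.2 b.2.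
have n1 := ler_norm (dX a.1 b.1 - dY a.2 b.2).
have n2 : - (dX a.1 b.1 - dY a.2 b.2) <= `|dX a.1 b.1 - dY a.2 b.2|.
  by rewrite -normrN ler_norm.
rewrite ler_norml; apply/andP; split; lra.
Qed.

Theorem mainTheorem5 (X Y : Type) (dX : metric X) (dY : metric Y) :
  (exists x : X, True) -> (exists y : Y, True) ->
  mcompact dX -> mcompact dY ->
  dGH_us dX dY = dGH dX dY.
Proof.
move=> _ _ cX cY; rewrite /dGH_us /dGH; congr (_ * _)%E.
apply/eqP; rewrite eq_le; apply/andP; split.
- apply: le_ereal_inf_tmp => _ [C corC <-].
  apply: (le_trans _ (dis_clos dX dY C)).
  apply: ereal_inf_lbound; exists (clos dX dY C) => //.
  have sub := @clos_sub _ _ dX dY C.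
  split.
  + case: corC => h1 h2; split.
    * by move=> x; have [y Hy] := h1 x; exists y; apply: sub.
    * by move=> y; have [x Hx] := h2 y; exists x; apply: sub.
  + apply: usc_of_closed => // x y; exact: clos_closed.
  + apply: (@usc_of_closed Y X dY dX (fun p => clos dX dY C (p.2, p.1))) => // y x.
    move=> nc; have [e e0 He] := @clos_closed _ _ dX dY C x y nc; exists e => // y' x' h1 h2; exact: He.
- apply: le_ereal_inf => _ [C [corC _ _] <-]; by exists C.
Qed.
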